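(* Let $I$ be a bounded open interval containing $0$, let $f\in C^\infty(I)$ be real-valued, and suppose the series $\hat f$ converges uniformly on $I$ (its sum need not be constant). Let $F(x):=\int_0^x f(s)\,ds$ for $x\in I$. Then the series $\hat F$ converges uniformly on $I$ and $\hat F(x)=F(0)=0$ for all $x\in I$.
   Context: For a smooth function $h$ on an interval containing the point $t$, $\hat h(t)$ denotes the series $\hat h(t):=\sum_{n=0}^{\infty}\frac{(-1)^n}{n!}\,t^n h^{(n)}(t)$; convergence of $\hat h$ refers to convergence of its partial sums, and $\hat h(t)$ also denotes the sum. *)

(* Defs.v *)
From Stdlib Require Import Reals Lra Factorial.
Open Scope R_scope.

Definition in_I (a b x : R) : Prop := a < x < b.

(* The existence of such a family is exactly h in C^infty((a,b)). *)
Definition deriv_family (a b : R) (h : R -> R) (ds : nat -> R -> R) : Prop :=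
  (forall x, in_I a b x -> ds 0%nat x = h x) /\
  (forall (n : nat) x, in_I a b x -> derivable_pt_lim (ds n) x (ds (S n) x)).

(* N-th partial sum of  hat h (t) = sum_n (-1)^n / n! * t^n * h^(n)(t). *)
Definition hat_partial (ds : nat -> R -> R) (N : nat) (t : R) : R :=
  sum_f_R0 (fun n => (-1) ^ n / INR (fact n) * t ^ n * ds n t) N.

Definition unif_cv_on (a b : R) (u : nat -> R -> R) (g : R -> R) : Prop :=
  forall eps : R, 0 < eps -> exists N : nat, forall (n : nat) x,
    (N <= n)%nat -> in_I a b x -> Rabs (u n x - g x) < eps.

(* Main.v *)
Require Import Defs.
From Stdlib Require Import Reals Lra Lia Factorial.
Open Scope R_scope.

Lemma dlim_local (g1 g2 : R -> R) x l (d : R) : 0 < d ->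
  (forall y, Rabs (y - x) < d -> g1 y = g2 y) ->
  derivable_pt_lim g1 x l -> derivable_pt_lim g2 x l.
Proof.
  intros Hd Heq H eps Heps.
  destruct (H eps Heps) as [del Hdel].
  assert (Hp : 0 < Rmin del d) by (apply Rmin_pos; [apply cond_pos|lra]).
  exists (mkposreal _ Hp). intros h hne hlt. simpl in hlt.
  rewrite <- (Heq (x+h)), <- (Heq x).
  - apply Hdel; auto. apply Rlt_le_trans with (1:=hlt); apply Rmin_l.
  - replace (x-x) with 0 by ring; rewrite Rabs_R0; lra.
  - replace (x+h-x) with h by ring. apply Rlt_le_trans with (1:=hlt); apply Rmin_r.
Qed.

Lemma cont_of_family a b f fs : deriv_family a b f fs ->
  forall y, in_I a b y -> continuity_pt f y.
Proof.
  intros [H0 H1] y Hy.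
  apply derivable_continuous_pt.
  exists (fs 1%nat y).
  unfold derivable_pt_abs.
  apply (dlim_local (fs 0%nat) f y _ (Rmin (y-a) (b-y))).
  - unfold in_I in Hy. apply Rmin_pos; lra.
  - intros z Hz. apply H0. unfold in_I in *.
    apply Rabs_def2 in Hz. destruct Hz.
    assert (Rmin (y-a) (b-y) <= y-a) by apply Rmin_l.
    assert (Rmin (y-a) (b-y) <= b-y) by apply Rmin_r. lra.
  - apply H1; auto.
Qed.

Lemma F_deriv a b f fs F : a < 0 < b -> deriv_family a b f fs ->
  (forall x (pr : Riemann_integrable f 0 x), in_I a b x -> F x = RiemannInt pr) ->
  forall x, in_I a b x -> derivable_pt_lim F x (f x).
Proof.
  intros hab Hf HF x Hx. unfold in_I in Hx.
  set (c := (a + Rmin 0 x)/2). set (d := (b + Rmax 0 x)/2).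
  assert (Hm1 : Rmin 0 x <= 0) by apply Rmin_l.
  assert (Hm2 : Rmin 0 x <= x) by apply Rmin_r.
  assert (Hm3 : 0 <= Rmax 0 x) by apply Rmax_l.
  assert (Hm4 : x <= Rmax 0 x) by apply Rmax_r.
  assert (Hm5 : a < Rmin 0 x) by (apply Rmin_glb_lt; lra).
  assert (Hm6 : Rmax 0 x < b) by (apply Rmax_lub_lt; lra).
  assert (hcd : c <= d) by (unfold c, d; lra).
  assert (C0 : forall y, c <= y <= d -> continuity_pt f y).
  { intros y Hy. apply (cont_of_family a b f fs Hf). unfold in_I, c, d in *; lra. }
  assert (integ : forall u v, c <= u <= d -> c <= v <= d -> Riemann_integrable f u v).
  { intros u v Hu Hv. destruct (Rle_dec u v).
    - apply continuity_implies_RiemannInt; auto. intros; apply C0; lra.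
    - apply RiemannInt_P1. apply continuity_implies_RiemannInt; [lra|].
      intros; apply C0; lra. }
  assert (Hc0 : c <= 0 <= d) by (unfold c, d; lra).
  set (K := RiemannInt (integ c 0 (conj (Rle_refl c) hcd) Hc0)).
  assert (HP : derivable_pt_lim (primitive hcd (FTC_P1 hcd C0)) x (f x)) by (apply RiemannInt_P28; unfold c, d; lra).
  assert (HQ : derivable_pt_lim (fun y => primitive hcd (FTC_P1 hcd C0) y - K) x (f x)).
  { replace (f x) with (f x - 0) by ring.
    apply (derivable_pt_lim_minus (primitive hcd (FTC_P1 hcd C0)) (fct_cte K)); auto. apply derivable_pt_lim_const. }
  apply (dlim_local _ F x _ (Rmin (x - c) (d - x))) in HQ; auto.
  - apply Rmin_pos; unfold c, d; lra.
  - intros y Hy. apply Rabs_def2 in Hy. destruct Hy.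
    assert (Rmin (x-c) (d-x) <= x-c) by apply Rmin_l.
    assert (Rmin (x-c) (d-x) <= d-x) by apply Rmin_r.
    assert (Hyc : c <= y <= d) by lra.
    rewrite (HF y (integ 0 y Hc0 Hyc)).
    2:{ unfold in_I, c, d in *; lra. }
    unfold primitive. case (Rle_dec c y); intro r; [|exfalso; lra]. case (Rle_dec y d); intro r0; [|exfalso; lra].
    rewrite <- (RiemannInt_P26 (integ c 0 (conj (Rle_refl c) hcd) Hc0) (integ 0 y Hc0 Hyc) (FTC_P1 hcd C0 r r0)).
    unfold K. ring.
Qed.

Theorem theorem9 (a b : R) (hab : a < 0 < b)
  (f : R -> R) (fs : nat -> R -> R) (Hf : deriv_family a b f fs)
  (Hfhat : exists g : R -> R, unif_cv_on a b (hat_partial fs) g)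
  (F : R -> R)
  (HF : forall x (pr : Riemann_integrable f 0 x), in_I a b x -> F x = RiemannInt pr) :
  F 0 = 0 /\
  exists Fs : nat -> R -> R,
    deriv_family a b F Fs /\
    unif_cv_on a b (hat_partial Fs) (fun _ => 0).
Proof.
  assert (HF0 : F 0 = 0).
  { rewrite (HF 0 (RiemannInt_P7 f 0)); [apply RiemannInt_P9| unfold in_I; lra]. }
  split; [exact HF0|].
  set (Fs := fun n => match n with O => F | S m => fs m end).
  assert (HFd := F_deriv a b f fs F hab Hf HF).
  destruct Hf as [Hf0 Hf1].
  exists Fs. split.
  { split; [intros; reflexivity|].
    intros n x Hx; destruct n; simpl.
    - rewrite Hf0 by exact Hx. apply HFd; exact Hx.
    - apply Hf1; exact Hx. }
  assert (HS0 : forall N, hat_partial Fs N 0 = 0).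
  { induction N as [|N IH].
    - unfold hat_partial; simpl. rewrite HF0. field.
    - unfold hat_partial in *; simpl sum_f_R0. rewrite IH. simpl. ring. }
  assert (HSd : forall N x, in_I a b x ->
     derivable_pt_lim (hat_partial Fs N) x ((-1)^N / INR (fact N) * x^N * fs N x)).
  { induction N as [|N IH]; intros x Hx.
    - apply (dlim_local F _ x _ 1); [lra| |].
      + intros y _. unfold hat_partial; simpl. field.
      + simpl. replace (1 / 1 * 1 * fs 0%nat x) with (f x).
        * apply HFd; exact Hx.
        * rewrite Hf0 by exact Hx. field.
    - set (T := fun t => (-1) ^ S N / INR (fact (S N)) * (t ^ S N * fs N t)).
      apply (dlim_local (fun t => hat_partial Fs N t + T t) _ x _ 1); [lra| |].
      + intros y _. unfold hat_partial, T. rewrite tech5. change (Fs (S N) y) with (fs N y). ring.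
      + assert (HT : derivable_pt_lim T x ((-1) ^ S N / INR (fact (S N)) *
            (INR (S N) * x ^ Nat.pred (S N) * fs N x + x ^ S N * fs (S N) x))).
        { apply (derivable_pt_lim_scal (fun t => t ^ S N * fs N t)).
          apply (derivable_pt_lim_mult (fun t => t ^ S N) (fs N)).
          - apply derivable_pt_lim_pow.
          - apply Hf1; exact Hx. }
        assert (H2 := derivable_pt_lim_plus _ _ _ _ _ (IH x Hx) HT).
        match goal with |- derivable_pt_lim _ _ ?l => replace l with
          ((-1) ^ N / INR (fact N) * x ^ N * fs N x +
           (-1) ^ S N / INR (fact (S N)) *
            (INR (S N) * x ^ Nat.pred (S N) * fs N x + x ^ S N * fs (S N) x)) end.
        * exact H2.
        * simpl Nat.pred. rewrite fact_simpl, mult_INR.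
          assert (INR (fact N) <> 0) by (apply INR_fact_neq_0).
          assert (INR (S N) <> 0) by (apply not_0_INR; discriminate).
          simpl pow. field. auto. }
  destruct Hfhat as [g Hg].
  intros eps Heps.
  set (M := Rmax (-a) b).
  assert (HM : 0 < M) by (unfold M; apply Rlt_le_trans with b; [lra|apply Rmax_r]).
  set (e := eps / (4 * M)).
  assert (He : 0 < e) by (unfold e; apply Rdiv_lt_0_compat; lra).
  assert (He2 : 4 * M * e = eps) by (unfold e; field; lra).
  destruct (Hg e He) as [N0 HN0].
  exists (S N0). intros n x Hn Hx.
  assert (HTb : forall c, in_I a b c ->
     Rabs ((-1)^n / INR (fact n) * c^n * fs n c) < 2 * e).
  { intros c Hc. destruct n as [|m]; [lia|].
    assert (E : (-1)^S m / INR (fact (S m)) * c^S m * fs (S m) c =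
       (hat_partial fs (S m) c - g c) - (hat_partial fs m c - g c)).
    { unfold hat_partial. rewrite tech5. ring. }
    rewrite E.
    assert (A1 := HN0 (S m) c ltac:(lia) Hc).
    assert (A2 := HN0 m c ltac:(lia) Hc).
    eapply Rle_lt_trans; [apply Rabs_triang|]. rewrite Rabs_Ropp. lra. }
  assert (HxM : Rabs x < M).
  { unfold in_I in Hx. unfold Rabs; destruct (Rcase_abs x).
    - apply Rlt_le_trans with (-a); [lra|apply Rmax_l].
    - apply Rlt_le_trans with b; [lra|apply Rmax_r]. }
  rewrite Rminus_0_r.
  destruct (Rtotal_order x 0) as [Hlt|[Heq|Hgt]].
  - destruct (MVT_cor2 (hat_partial Fs n)
       (fun t => (-1)^n / INR (fact n) * t^n * fs n t) x 0 Hlt) as [c [Hc1 Hc2]].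
    { intros c Hc. apply HSd. unfold in_I in *; lra. }
    rewrite HS0 in Hc1.
    replace (hat_partial Fs n x) with (- ((-1)^n / INR (fact n) * c^n * fs n c * (0 - x))) by lra.
    rewrite Rabs_Ropp, Rabs_mult.
    assert (Hc := HTb c ltac:(unfold in_I in *; lra)).
    assert (0 <= Rabs (0 - x)) by apply Rabs_pos.
    replace (Rabs (0 - x)) with (Rabs x) by (rewrite <- Rabs_Ropp; f_equal; ring).
    assert (0 <= Rabs ((-1)^n / INR (fact n) * c^n * fs n c)) by apply Rabs_pos.
    nra.
  - subst x. rewrite HS0, Rabs_R0. exact Heps.
  - destruct (MVT_cor2 (hat_partial Fs n)
       (fun t => (-1)^n / INR (fact n) * t^n * fs n t) 0 x Hgt) as [c [Hc1 Hc2]].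
    { intros c Hc. apply HSd. unfold in_I in *; lra. }
    rewrite HS0 in Hc1.
    replace (hat_partial Fs n x) with ((-1)^n / INR (fact n) * c^n * fs n c * (x - 0)) by lra.
    rewrite Rabs_mult, Rminus_0_r.
    assert (Hc := HTb c ltac:(unfold in_I in *; lra)).
    assert (0 <= Rabs x) by apply Rabs_pos.
    assert (0 <= Rabs ((-1)^n / INR (fact n) * c^n * fs n c)) by apply Rabs_pos.
    nra.
Qed.
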